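(* For all blueprints $\alpha,\beta$: if $\alpha\sqsubseteq_1\beta$, then $\mathbb F(\alpha)\subseteq\mathbb F(\beta)$.
   Context: Addresses are finite sequences of positive integers with prefix order $\le$, concatenation $\cdot$, empty address $\varepsilon$. A partial tree is a function on a set of addresses; $\pi|_a$ is $c\mapsto\pi(a\cdot c)$. $\mathfrak S$ consists of all formulas (arity 0) and symbols $@_\phi$ (arity 2). A blueprint is a finite partial tree with values in $\mathfrak S$ such that if $\alpha(a)=@_\phi$ then $\alpha|_{a\cdot(1)},\alpha|_{a\cdot(2)}$ are non-empty. Notation: $\emptyset_{\mathbb B}$ empty blueprint; $\phi$ denotes $\varepsilon\mapsto\phi$; $@_\phi(\alpha_1,\alpha_2)$ ($\alpha_i$ non-empty) has root $@_\phi$ and $\alpha_i$ at $(i)$; for pairwise incomparable $\bar a=(a_1,\dots,a_k)$, $*_{\bar a}(\alpha_1,\dots,\alpha_k)$ is the blueprint of minimal domain whose restriction at $a_i$ is $\alpha_i$; $*(\alpha_1,\dots,\alpha_k)=*_{((1),\dots,(k))}(\dots)$. Extraction $\alpha\rhd^a_\phi\beta$: (1) $\phi\rhd^\varepsilon_\phi\emptyset_{\mathbb B}$; (2) if $\alpha\rhd^a_\phi\beta$ ($\gamma,\alpha$ non-empty) then $@_\psi(\gamma,\alpha)\rhd^{(2)\cdot a}_\phi*(\gamma,\beta)$; (3) if $\alpha\rhd^a_\phi\beta$, $b\ne\varepsilon$, $(b,c_1,\dots,c_k)$ pairwise incomparable, then $*_{(b,c_1,\dots,c_k)}(\alpha,\gamma_1,\dots,\gamma_k)\rhd^{b\cdot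 a}_\phi*_{(b,c_1,\dots,c_k)}(\beta,\gamma_1,\dots,\gamma_k)$. $\rhd^+_\phi$ is the transitive closure of $\bigcup_a\rhd^a_\phi$; $\mathbb F(\alpha)$ is the set of sequences $(\phi_1,\dots,\phi_n)$, $n\ge0$, with $\alpha\rhd^+_{\phi_n}\cdots\rhd^+_{\phi_1}\emptyset_{\mathbb B}$. $\equiv$ is the least relation with: $\emptyset_{\mathbb B}\equiv\emptyset_{\mathbb B}$; $\phi\equiv\phi$; $@_\phi(\alpha_1,\alpha_2)\equiv@_\phi(\beta_1,\beta_2)$ if $\alpha_i\equiv\beta_i$; $*_{\bar a}(\alpha_1,\dots,\alpha_n)\equiv*_{\bar b}(\beta_1,\dots,\beta_n)$ if $\alpha_i\equiv\beta_i$ for all $i$ (with $\bar a,\bar b$ pairwise-incomparable sequences of length $n$, not both $(\varepsilon)$, and some $\alpha_i,\beta_i$ non-empty). $\curvearrowleft_m$ is the least relation with: (1) if $\gamma_1\equiv\dots\equiv\gamma_{m+1}\not\equiv\emptyset_{\mathbb B}$ then $*_{\bar a}(\gamma_1,\dots,\gamma_m)\curvearrowleft_m*_{\bar a\cdot(b)}(\gamma_1,\dots,\gamma_{m+1})$; (2) if $\alpha=*_{\bar a}(\alpha_1,\dots,\alpha_n)$, $\beta=*_{\bar b}(\beta_1,\dots,\beta_p)$, $\alpha\curvearrowleft_m\beta$, $\gamma$ non-empty, then $@_\phi(\alpha,\gamma)\curvearrowleft_m@_\phi(\beta,\gamma)$, $@_\phi(\gamma,\alpha)\curvearrowleft_m@_\phi(\gamma,\beta)$,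 $*_{\bar a\cdot(c)}(\alpha_1,\dots,\alpha_n,\gamma)\curvearrowleft_m*_{\bar b\cdot(c)}(\beta_1,\dots,\beta_p,\gamma)$. $\sqsubseteq_m$ is the reflexive transitive closure of $\equiv\cup\curvearrowleft_m$. *)

(* Defs.v *)
From Stdlib Require Import Relations.Relation_Operators.
From mathcomp Require Import all_boot.
Set Implicit Arguments. Unset Strict Implicit. Unset Printing Implicit Defensive.

Section Blueprints.
Variable F : Type. (* the set of formulas *)

Definition addr := seq nat.
Definition is_addr (a : addr) : bool := all (fun i => 0 < i) a.

Definition incomparable (a b : addr) : bool := ~~ prefix a b && ~~ prefix b a.
Definition pw_incomp (l : seq addr) : bool := all is_addr l && pairwise incomparable l.

(* The symbols of S: formulas (arity 0) and @_phi (arity 2). *)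
Inductive sym := Form of F | At of F.

Definition ptree := addr -> option sym.
Definition pempty : ptree := fun _ => None.
Definition nonempty (t : ptree) : Prop := exists a, t a <> None.
Definition restr (t : ptree) (a : addr) : ptree := fun c => t (a ++ c).

Definition blueprint (t : ptree) : Prop :=
  [/\ exists l : seq addr, forall a, t a <> None -> a \in l,
      forall a, t a <> None -> is_addr a
    & forall a phi, t a = Some (At phi) ->
        nonempty (restr t (a ++ [:: 1])) /\ nonempty (restr t (a ++ [:: 2]))].

Definition leaf (phi : F) : ptree := fun a => if a is [::] then Some (Form phi) else None.

Definition at2 (phi : F) (t1 t2 : ptree) : ptree := fun a =>
  match a with
  | [::] => Some (At phi)
  | i :: c => if i == 1 then t1 c else if i == 2 then t2 c else None
  end.

(* *_{(a_1,..,a_k)}(t_1,..,t_k), given as the list of pairs (a_i, t_i);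
   meaningful when the a_i are pairwise incomparable: the tree with minimal
   domain whose restriction at a_i is t_i. *)
Definition star (s : seq (addr * ptree)) : ptree := fun d =>
  match [seq p <- s | prefix p.1 d] with
  | p :: _ => p.2 (drop (size p.1) d)
  | [::] => None
  end.

Definition star0 (ts : seq ptree) : ptree :=
  star (zip [seq [:: i.+1] | i <- iota 0 (size ts)] ts).

Definition all_bp (s : seq (addr * ptree)) : Prop :=
  forall i, i < size s -> blueprint (nth ([::], pempty) s i).2.

Inductive ext : addr -> F -> ptree -> ptree -> Prop :=
| ext_leaf phi : ext [::] phi (leaf phi) pempty
| ext_at a phi psi g t u :
    blueprint g -> nonempty g -> nonempty t ->
    ext a phi t u ->
    ext (2 :: a) phi (at2 psi g t) (star0 [:: g; u])
| ext_star a phi b t u (gs : seq (addr * ptree)) :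
    b <> [::] -> pw_incomp (b :: unzip1 gs) ->
    all_bp gs ->
    ext a phi t u ->
    ext (b ++ a) phi (star ((b, t) :: gs)) (star ((b, u) :: gs)).

Definition ext_plus (phi : F) : ptree -> ptree -> Prop :=
  clos_trans ptree (fun t u => exists a, ext a phi t u).

(* inF t l  <->  l = (phi_1,..,phi_n) is in F(t), i.e.
   t |>^+_{phi_n} ... |>^+_{phi_1} empty. *)
Inductive inF : ptree -> seq F -> Prop :=
| inF_nil : inF pempty [::]
| inF_rcons t u phi l : ext_plus phi t u -> inF u l -> inF t (rcons l phi).

Inductive equiv : ptree -> ptree -> Prop :=
| equiv_empty : equiv pempty pempty
| equiv_leaf phi : equiv (leaf phi) (leaf phi)
| equiv_at phi t1 t2 u1 u2 :
    nonempty t1 -> nonempty t2 -> nonempty u1 -> nonempty u2 ->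
    equiv t1 u1 -> equiv t2 u2 -> equiv (at2 phi t1 t2) (at2 phi u1 u2)
| equiv_star (s r : seq (addr * ptree)) :
    size s = size r ->
    pw_incomp (unzip1 s) -> pw_incomp (unzip1 r) ->
    ~ (unzip1 s = [:: [::]] /\ unzip1 r = [:: [::]]) ->
    (forall i, i < size s -> equiv (nth ([::], pempty) s i).2 (nth ([::], pempty) r i).2) ->
    (exists i, i < size s /\ nonempty (nth ([::], pempty) s i).2
                          /\ nonempty (nth ([::], pempty) r i).2) ->
    equiv (star s) (star r).

Inductive arr (m : nat) : ptree -> ptree -> Prop :=
| arr_base (as_ : seq addr) (b : addr) (gs : seq ptree) :
    size as_ = m -> size gs = m.+1 ->
    pw_incomp (rcons as_ b) ->
    (forall i, i < m -> equiv (nth pempty gs i) (nth pempty gs i.+1)) ->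
    ~ equiv (nth pempty gs m) pempty ->
    arr m (star (zip as_ (take m gs))) (star (zip (rcons as_ b) gs))
| arr_atl phi t u g :
    arr m t u -> nonempty t -> nonempty u -> blueprint g -> nonempty g ->
    arr m (at2 phi t g) (at2 phi u g)
| arr_atr phi t u g :
    arr m t u -> nonempty t -> nonempty u -> blueprint g -> nonempty g ->
    arr m (at2 phi g t) (at2 phi g u)
| arr_star (s r : seq (addr * ptree)) (c : addr) g :
    pw_incomp (unzip1 s) -> pw_incomp (unzip1 r) ->
    all_bp s -> all_bp r ->
    pw_incomp (rcons (unzip1 s) c) -> pw_incomp (rcons (unzip1 r) c) ->
    arr m (star s) (star r) -> blueprint g -> nonempty g ->
    arr m (star (rcons s (c, g))) (star (rcons r (c, g))).

Definition sqsub (m : nat) : ptree -> ptree -> Prop :=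
  clos_refl_trans ptree (fun t u => equiv t u \/ arr m t u).

End Blueprints.

(* Main.v *)
From Pilot Require Import Defs.
From Stdlib Require Import Relations.Relation_Operators.
From mathcomp Require Import all_boot.
From Stdlib Require Import FunctionalExtensionality Classical.
Set Implicit Arguments. Unset Strict Implicit. Unset Printing Implicit Defensive.

Section Proofs.
Variable F : Type.
Local Notation ptree := (ptree F).
Local Notation pe := (pempty F).
Local Notation bequiv := (@Pilot.Defs.equiv F).
Local Notation nth0 s i := (nth ([::], pe) s i).
Implicit Types (t u g h : ptree) (a b c d : addr) (phi psi : F).

Lemma fext (f g : ptree) : (forall d, f d = g d) -> f = g.
Proof. exact: functional_extensionality. Qed.

Lemma prefix_cmp (a b x y : addr) : a ++ x = b ++ y -> prefix a b || prefix b a.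
Proof.
elim: a b => [|h a IH] [|k b] //=.
by case=> -> /IH; rewrite eqxx.
Qed.

Lemma prefix_cmp2 (a b d : addr) : prefix a d -> prefix b d -> prefix a b || prefix b a.
Proof. by move=> /prefixP[x ->] /prefixP[y]; move/esym/prefix_cmp; rewrite orbC. Qed.

Lemma incomp_pref (a b d : addr) : incomparable a b -> prefix a d -> prefix b d -> False.
Proof. by rewrite /incomparable => /andP[na nb] ha hb; move: (prefix_cmp2 ha hb); rewrite (negbTE na) (negbTE nb). Qed.

Lemma incompC (a b : addr) : incomparable a b = incomparable b a.
Proof. by rewrite /incomparable andbC. Qed.

Lemma prefix_drop (b a d : addr) : prefix b d -> prefix d (b ++ a) = prefix (drop (size b) d) a.
Proof. by move=> /prefixP[z ->]; rewrite drop_size_cat // prefix_catr // eqxx. Qed.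

Lemma prefix_split (b a d : addr) : prefix d (b ++ a) -> ~~ prefix b d -> prefix d b.
Proof. by move=> /prefixP[w] /esym /prefix_cmp; case/orP=> [->|->]. Qed.

Lemma star_cons (c : addr) (h : ptree) (s : seq (addr * ptree)) (d : addr) :
  star ((c, h) :: s) d = if prefix c d then h (drop (size c) d) else star s d.
Proof. by rewrite /star /=; case: ifP. Qed.

Lemma star_none (s : seq (addr * ptree)) (d : addr) : (forall i, i < size s -> ~~ prefix (nth0 s i).1 d) -> star s d = None.
Proof.
elim: s => [|[c h] s IH] H //=.
rewrite star_cons (negbTE (H 0 isT)) IH // => i hi; exact: (H i.+1).
Qed.

Lemma star_some (s : seq (addr * ptree)) (d : addr) : star s d <> None -> exists i, i < size s /\ prefix (nth0 s i).1 d.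
Proof.
move=> H; apply: NNPP => H'; apply: H; apply: star_none => i hi.
by apply/negP => hp; apply: H'; exists i.
Qed.

Lemma star_nth (s : seq (addr * ptree)) i (d : addr) : pairwise incomparable (unzip1 s) -> i < size s ->
  prefix (nth0 s i).1 d -> star s d = (nth0 s i).2 (drop (size (nth0 s i).1) d).
Proof.
elim: s i => [|[c h] s IH] [|i] //= /andP[hall hpw] hi hp; rewrite star_cons.
  by rewrite hp.
case: ifP => hc; last exact: IH.
exfalso; apply: (@incomp_pref c (nth0 s i).1 d) => //.
move/allP: hall; apply.
by rewrite -(nth_map _ [::]) // mem_nth // size_map.
Qed.

Definition remove (t : ptree) (a : addr) : ptree := fun d => if prefix d a then None else t d.

Definition Step (t : ptree) (a : addr) (phi : F) : Prop :=
  [/\ t a = Some (Form phi),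
      (forall z : addr, z != [::] -> t (a ++ z) = None)
    & (forall p : addr, prefix p a -> p != a -> t p <> None ->
          (exists psi, t p = Some (At psi)) /\ nth 0 a (size p) = 2 /\
          (forall i c, i != 1 -> i != 2 -> t (p ++ i :: c) = None))].

Lemma pw_cons_inv (b : addr) (gs : seq (addr * ptree)) :
  pw_incomp (b :: unzip1 gs) ->
  (forall i, i < size gs -> incomparable b (nth0 gs i).1) /\ pw_incomp (unzip1 gs).
Proof.
rewrite /pw_incomp /= => /andP[/andP[_ ha] /andP[hall hpw]]; split; last by rewrite ha hpw.
move=> i hi; move/allP: hall; apply.
by rewrite -(nth_map _ [::]) // mem_nth // size_map.
Qed.

Lemma star_pref_none (b : addr) (gs : seq (addr * ptree)) (p : addr) :
  (forall i, i < size gs -> incomparable b (nth0 gs i).1) -> prefix p b -> star gs p = None.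
Proof.
move=> hb hp; apply: star_none => i hi; apply/negP => hq.
have := hb i hi; rewrite /incomparable => /andP[_ /negP]; apply.
exact: prefix_trans hq hp.
Qed.

Lemma ext_sound a phi t u : ext a phi t u -> Step t a phi /\ u = remove t a.
Proof.
elim => {a phi t u}.
- move=> phi; split; last by apply: fext => -[|x d].
  split => //; first by case.
  by move=> p; rewrite prefixs0 => /eqP ->; rewrite eqxx.
- move=> a phi psi g t u _ _ _ _ [[S1 S2 S3] ->]; split; last first.
    apply: fext => -[|j d] //; rewrite /star0 /remove /= !star_cons /=.
    by case: j => [|[|[|j]]] //=; rewrite prefix0s drop0.
  split => //.
  move=> [|j p] /=.
    move=> _ _ _; split; first by exists psi.
    split => // i c /negbTE -> /negbTE ->; done.
  move=> /andP[/eqP -> hp] hne hn.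
  have hne' : p != a by apply: contraNneq hne => ->.
  have [[psi' hpsi] [hnth hch]] := S3 p hp hne' hn.
  split; first by exists psi'.
  by split.
- move=> a phi b t u gs hb0 hpw hbp _ [[S1 S2 S3] ->].
  have [hb hpw'] := pw_cons_inv hpw.
  split; last first.
    apply: fext => d; rewrite /remove !star_cons.
    case hbd: (prefix b d); first by rewrite prefix_drop.
    case hd: (prefix d (b ++ a)) => //.
    by rewrite (star_pref_none hb (prefix_split hd (negbT hbd))).
  split.
  + by rewrite star_cons prefix_prefix drop_size_cat.
  + by move=> z hz; rewrite star_cons -catA prefix_prefix drop_size_cat // S2.
  + move=> p hp hne; rewrite star_cons.
    case hbp': (prefix b p); last first.
      by rewrite (star_pref_none hb (prefix_split hp (negbT hbp'))).
    case/prefixP: hbp' => p' hpp; subst p; rewrite drop_size_cat // => hn.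
    have hp' : prefix p' a by move: hp; rewrite prefix_catr // eqxx.
    have hne' : p' != a by apply: contraNneq hne => ->.
    have [[psi' hpsi] [hnth hch]] := S3 p' hp' hne' hn.
    split; first by exists psi'.
    split; first by rewrite nth_cat size_cat ltnNge leq_addr /= addKn.
    by move=> i c hi1 hi2; rewrite star_cons -catA prefix_prefix drop_size_cat // hch.
Qed.
Lemma is_addr_cat (a c : addr) : is_addr (a ++ c) = is_addr a && is_addr c.
Proof. by rewrite /is_addr all_cat. Qed.

Lemma bp_pempty : blueprint pe.
Proof. by split => //; exists [::]. Qed.

Lemma bp_restr t a : blueprint t -> blueprint (restr t a).
Proof.
case=> [[l hl] ha hat]; split.
- exists [seq drop (size a) d | d <- l] => c hc.
  by apply/mapP; exists (a ++ c); [exact: hl | rewrite drop_size_cat].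
- by move=> c /ha; rewrite is_addr_cat => /andP[].
- move=> c phi; rewrite /restr => /hat [[x hx] [y hy]].
  by split; [exists x; move: hx | exists y; move: hy]; rewrite /restr -!catA.
Qed.

Lemma bp_remove t a : blueprint t -> blueprint (remove t a).
Proof.
case=> [[l hl] ha hat]; split.
- exists l => c; rewrite /remove; case: ifP => // _; exact: hl.
- by move=> c; rewrite /remove; case: ifP => // _; exact: ha.
- move=> c phi; rewrite /remove; case: ifP => // hca /hat [[x hx] [y hy]].
  split; [exists x | exists y]; rewrite /restr; case: ifP => // hp;
    by move: hca; rewrite (catl_prefix (catl_prefix hp)).
Qed.

Lemma bp_leaf phi : blueprint (leaf phi).
Proof. by split; [exists [:: [::]]; case | case | case]. Qed.

Lemma bp_at2 psi g t : blueprint g -> blueprint t -> nonempty g -> nonempty t ->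
  blueprint (at2 psi g t).
Proof.
case=> [[lg hlg] hag hatg] [[lt hlt] hat htt] hng hnt; split.
- exists ([::] :: [seq 1 :: d | d <- lg] ++ [seq 2 :: d | d <- lt]) => -[|j c] //=.
  case: j => [|[|[|j]]] //= hc; rewrite inE mem_cat; apply/orP; right; apply/orP.
    by left; apply/mapP; exists c => //; exact: hlg.
  by right; apply/mapP; exists c => //; exact: hlt.
- move=> [|j c] //=; case: j => [|[|[|j]]] //= hc; rewrite /is_addr /=.
    exact: hag.
  exact: hat.
- move=> [|j c] phi /=.
    by case=> _; split.
  case: j => [|[|[|j]]] //= /[dup] h.
    by move/hatg => [[x hx] [y hy]]; split; [exists x | exists y].
  by move/htt => [[x hx] [y hy]]; split; [exists x | exists y].
Qed.

Lemma bp_star_cons c h (s : seq (addr * ptree)) : blueprint h -> blueprint (star s) ->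
  (forall i, i < size s -> incomparable c (nth0 s i).1) -> is_addr c ->
  blueprint (star ((c, h) :: s)).
Proof.
case=> [[lh hlh] hah hath] [[ls hls] has hats] hinc hc; split.
- exists ([seq c ++ d | d <- lh] ++ ls) => d; rewrite star_cons mem_cat.
  case: ifP => hcd hd; apply/orP; last by right; exact: hls.
  left; apply/mapP; exists (drop (size c) d); first exact: hlh.
  by case/prefixP: hcd => z ->; rewrite drop_size_cat.
- move=> d; rewrite star_cons; case: ifP => hcd hd; last exact: has.
  case/prefixP: hcd hd => z -> hd; rewrite is_addr_cat hc /=.
  by move: (hah _ hd); rewrite drop_size_cat.
- move=> d phi; rewrite star_cons; case: ifP => hcd.
    case/prefixP: hcd => z ->; rewrite drop_size_cat // => /hath [[x hx] [y hy]].
    split; [exists x; move: hx | exists y; move: hy]; rewrite /restr star_cons -!catA prefix_prefix drop_size_cat //.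
  move=> /hats [[x hx] [y hy]]; split; [exists x | exists y]; rewrite /restr star_cons;
    case: ifP => // hp.
  + have [i [hi hpi]] := star_some hx.
    by exfalso; apply: (incomp_pref (hinc i hi) hp hpi).
  + have [i [hi hpi]] := star_some hy.
    by exfalso; apply: (incomp_pref (hinc i hi) hp hpi).
Qed.

Lemma all_bp_cons c h (s : seq (addr * ptree)) : all_bp ((c, h) :: s) -> blueprint h /\ all_bp s.
Proof. by move=> H; split; [exact: (H 0) | move=> i hi; exact: (H i.+1)]. Qed.

Lemma bp_star (s : seq (addr * ptree)) : pw_incomp (unzip1 s) -> all_bp s -> blueprint (star s).
Proof.
elim: s => [|[c h] s IH] hpw hbp; first exact: bp_pempty.
have [hinc hpw'] := pw_cons_inv hpw.
have [hh hs] := all_bp_cons hbp.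
apply: bp_star_cons => //; first exact: IH.
by move: hpw; rewrite /pw_incomp /= => /andP[/andP[]].
Qed.
Lemma le_foldr_max (x : nat) (s : seq nat) : x \in s -> x <= foldr maxn 0 s.
Proof.
elim: s => //= y s IH; rewrite inE => /orP[/eqP ->|/IH h]; rewrite leq_max ?leqnn //.
by rewrite h orbT.
Qed.

Lemma pw_singles (j : nat) (L : seq nat) : 0 < j -> all (fun i => 0 < i) L ->
  uniq (j :: L) -> pw_incomp [seq [:: i] | i <- j :: L].
Proof.
move=> hj hL hu; apply/andP; split.
  apply/allP => x /mapP [i hi ->]; rewrite /is_addr /= andbT.
  by move: hi; rewrite inE => /orP[/eqP ->|/(allP hL)].
rewrite pairwise_map; move: hu; rewrite uniq_pairwise; apply: sub_pairwise.
by move=> x y /= hxy; rewrite /incomparable /= !andbT (negbTE hxy) eq_sym (negbTE hxy).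
Qed.

Section Decomp.
Variables (t : ptree) (j : nat) (K : nat).
Hypothesis ht0 : t [::] = None.
Hypothesis hK : forall k c, t (k :: c) <> None -> 0 < k <= K.
Let L := [seq i <- iota 1 K | i != j].
Let gs := [seq ([:: i], restr t [:: i]) | i <- L].

Lemma unzip1_gs : unzip1 gs = [seq [:: i] | i <- L].
Proof. by rewrite /unzip1 -map_comp. Qed.

Lemma pw_gs : 0 < j -> pw_incomp ([:: j] :: unzip1 gs).
Proof.
move=> hj; rewrite unzip1_gs; apply: (pw_singles (L := L) hj).
- apply/allP => i; rewrite mem_filter mem_iota => /andP[_ /andP[]] //.
- by rewrite /= mem_filter eqxx /= filter_uniq // iota_uniq.
Qed.

Lemma allbp_gs : blueprint t -> all_bp gs.
Proof.
move=> hbp i; rewrite size_map => hi.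
by rewrite (nth_map 0) //=; apply: bp_restr.
Qed.

Lemma star_decomp (X : ptree) (d : addr) : 0 < j ->
  star (([:: j], X) :: gs) d = match d with [::] => None | k :: c => if k == j then X c else t (k :: c) end.
Proof.
move=> hj; have [_ /andP[_ hpw]] := pw_cons_inv (pw_gs hj).
case: d => [|k c].
  rewrite star_cons /=; apply: star_none => i hi; rewrite (nth_map 0) -?(size_map (fun i => ([::i], restr t [::i]))) //.
rewrite star_cons /= prefix0s andbT eq_sym drop0; case: ifP => // hkj.
have [kL|kL] := boolP (k \in L).
  have hi : index k L < size gs by rewrite size_map index_mem.
  rewrite (star_nth hpw hi); rewrite (nth_map 0) ?index_mem // nth_index //=.
    by rewrite drop0.
  by rewrite eqxx prefix0s.
rewrite star_none.
  case E: (t (k :: c)) => [v|] //; exfalso; have /hK /andP[h1 h2] : t (k :: c) <> None by rewrite E.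
  by move: kL; rewrite mem_filter hkj mem_iota h1 add1n ltnS h2.
move=> i hi; rewrite (nth_map 0) -?(size_map (fun i => ([::i], restr t [::i]))) //=.
rewrite prefix0s andbT; apply: contra kL => /eqP <-; apply: mem_nth.
by move: hi; rewrite size_map.
Qed.

End Decomp.
Lemma ext_complete_n n : forall a t phi, size a <= n -> blueprint t -> Step t a phi ->
  ext a phi t (remove t a).
Proof.
elim: n => [|n IH] a t phi hs hbp [S1 S2 S3].
  case: a hs S1 S2 S3 => // _ S1 S2 S3.
  have -> : t = leaf phi.
    by apply: fext => -[|x d] //; rewrite (S2 (x :: d)).
  have -> : remove (leaf phi) [::] = pe by apply: fext => -[|x d].
  exact: ext_leaf.
case ht0: (t [::]) => [[psi|psi]|]; try have hn0 : t [::] <> None by rewrite ht0.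
- case: a hs S1 S2 S3 => [|x a'] hs S1 S2 S3.
    have -> : t = leaf phi.
      by apply: fext => -[|y d] /=; [rewrite ht0 -S1 | rewrite (S2 (y :: d))].
    have -> : remove (leaf phi) [::] = pe by apply: fext => -[|y d].
    exact: ext_leaf.
  have [[psi' h] _] := S3 [::] (prefix0s _) isT hn0.
  by rewrite ht0 in h.
- case: a hs S1 S2 S3 => [|x a'] hs S1 S2 S3; first by rewrite ht0 in S1.
  have [_ [/= hx hch]] := S3 [::] (prefix0s _) isT hn0.
  subst x.
  have E1 : remove t (2 :: a') = star0 [:: restr t [:: 1]; remove (restr t [:: 2]) a'].
    apply: fext => -[|k c]; first by rewrite /remove prefix0s.
    rewrite /star0 /remove /= !star_cons /= !prefix0s drop0.
    case: k => [|[|[|k]]] //=; exact: (hch _ c).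
  have E2 : t = at2 psi (restr t [:: 1]) (restr t [:: 2]).
    apply: fext => -[|k c] //=; case: k => [|[|[|k]]] //=; exact: (hch _ c).
  rewrite E1 {1}E2.
  have [hbp1 _ hat12] := hbp.
  have [hne1 _] := hat12 _ _ ht0.
  apply: ext_at.
  + exact: bp_restr.
  + exact: hne1.
  + by exists a'; rewrite /restr /= S1.
  + apply: IH => //; first exact: bp_restr.
    split => //.
    move=> p hp hne hn.
    have hne' : 2 :: p != 2 :: a' by apply: contraNneq hne => -[->].
    have hp2 : prefix (2 :: p) (2 :: a') by rewrite /= ?eqxx hp.
    exact: S3 (2 :: p) hp2 hne' hn.
- case: a hs S1 S2 S3 => [|j a'] hs S1 S2 S3; first by rewrite ht0 in S1.
  have [[l hl] haddr hat] := hbp.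
  set K := foldr maxn 0 [seq head 0 d | d <- l].
  have hK : forall k c, t (k :: c) <> None -> 0 < k <= K.
    move=> k c hn; apply/andP; split; first by have := haddr _ hn; rewrite /is_addr /= => /andP[].
    by apply: le_foldr_max; apply/mapP; exists (k :: c) => //; exact: hl.
  have hj : 0 < j by have := haddr (j :: a'); rewrite S1 => /(_ ltac:(done)); rewrite /is_addr /= => /andP[].
  set gs := [seq ([:: i], restr t [:: i]) | i <- [seq i <- iota 1 K | i != j]].
  have E2 : t = star (([:: j], restr t [:: j]) :: gs).
    apply: fext => d; rewrite (star_decomp hK _ _ hj).
    by case: d => [|k c] //; case: ifP => // /eqP ->.
  have E1 : remove t (j :: a') = star (([:: j], remove (restr t [:: j]) a') :: gs).
    apply: fext => d; rewrite (star_decomp hK _ _ hj).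
    case: d => [|k c]; first by rewrite /remove prefix0s.
    rewrite /remove /=; case: eqP => [->|] //=.
  rewrite E1 {1}E2.
  have := @ext_star F a' phi [:: j] (restr t [:: j]) (remove (restr t [:: j]) a') gs.
  apply => //.
  + exact: (pw_gs t K hj).
  + exact: (allbp_gs (j:=j) (K:=K) hbp).
  + apply: IH => //; first exact: bp_restr.
    split => //.
    move=> p hp hne hn.
    have hne' : j :: p != j :: a' by apply: contraNneq hne => -[->].
    have hp2 : prefix (j :: p) (j :: a') by rewrite /= ?eqxx hp.
    exact: S3 (j :: p) hp2 hne' hn.
Qed.
Lemma ext_complete t a phi : blueprint t -> Step t a phi -> ext a phi t (remove t a).
Proof. exact: (@ext_complete_n (size a)). Qed.

Lemma Step_restr t b a phi : Step t (b ++ a) phi -> Step (restr t b) a phi.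
Proof.
case=> S1 S2 S3; split => //.
- by move=> z hz; rewrite /restr catA S2.
- move=> p hp hne hn.
  have hp2 : prefix (b ++ p) (b ++ a) by rewrite prefix_catr // eqxx.
  have hne2 : b ++ p != b ++ a by apply: contraNneq hne => /(congr1 (drop (size b))); rewrite !drop_size_cat // => ->.
  have [h1 [h2 h3]] := S3 _ hp2 hne2 hn.
  split => //; split; first by move: h2; rewrite nth_cat size_cat ltnNge leq_addr /= addKn.
  by move=> i c hi1 hi2; rewrite /restr catA h3.
Qed.

Lemma Step_at2 psi g t a phi : Step t a phi -> Step (at2 psi g t) (2 :: a) phi.
Proof.
case=> S1 S2 S3; split => //.
move=> [|j p] /=.
  move=> _ _ _; split; first by exists psi.
  split => // i c /negbTE -> /negbTE ->; done.
move=> /andP[/eqP -> hp] hne hn.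
have hne' : p != a by apply: contraNneq hne => ->.
have [[psi' hpsi] [hnth hch]] := S3 p hp hne' hn.
split; first by exists psi'.
by split.
Qed.

Lemma remove_at2 psi g t a : remove (at2 psi g t) (2 :: a) = star0 [:: g; remove t a].
Proof.
apply: fext => -[|j d] //; rewrite /star0 /remove /= !star_cons /=.
by case: j => [|[|[|j]]] //=; rewrite prefix0s drop0.
Qed.

Lemma pw_nth (r : seq (addr * ptree)) i k : pw_incomp (unzip1 r) -> i < size r -> k < size r ->
  i != k -> incomparable (nth0 r i).1 (nth0 r k).1.
Proof.
case/andP=> _ /(pairwiseP [::]) H hi hk hik.
rewrite -!(nth_map ([::], pe) [::] fst) //.
have hi' : i < size (unzip1 r) by rewrite size_map.
have hk' : k < size (unzip1 r) by rewrite size_map.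
case: (ltngtP i k) hik => // hlt _.
  exact: H.
rewrite incompC; exact: H.
Qed.

Lemma star_above_none (r : seq (addr * ptree)) i d : pw_incomp (unzip1 r) -> i < size r ->
  prefix d (nth0 r i).1 -> ~~ prefix (nth0 r i).1 d -> star r d = None.
Proof.
move=> hpw hi hd hnd; case E: (star r d) => [v|] //.
have [k [hk hpk]] : exists k, k < size r /\ prefix (nth0 r k).1 d by apply: star_some; rewrite E.
have [/eqP eik|nik] := boolP (i == k); first by subst k; rewrite hpk in hnd.
exfalso; apply: (incomp_pref (pw_nth hpw hi hk nik) (prefix_refl _)).
exact: prefix_trans hpk hd.
Qed.

Lemma Step_star (r : seq (addr * ptree)) i a phi : pw_incomp (unzip1 r) -> i < size r ->
  Step (nth0 r i).2 a phi -> Step (star r) ((nth0 r i).1 ++ a) phi.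
Proof.
move=> hpw hi [S1 S2 S3]; have hpw' : pairwise incomparable (unzip1 r) by case/andP: hpw.
split.
- by rewrite (star_nth hpw' hi (prefix_prefix _ _)) drop_size_cat.
- by move=> z hz; rewrite -catA (star_nth hpw' hi (prefix_prefix _ _)) drop_size_cat // S2.
- move=> p hp hne; case hbp: (prefix (nth0 r i).1 p); last first.
    by rewrite (star_above_none hpw hi (prefix_split hp (negbT hbp)) (negbT hbp)).
  case/prefixP: hbp => p' hpp; subst p.
  rewrite (star_nth hpw' hi (prefix_prefix _ _)) drop_size_cat // => hn.
  have hp' : prefix p' a by move: hp; rewrite prefix_catr // eqxx.
  have hne' : p' != a by apply: contraNneq hne => ->.
  have [[psi' hpsi] [hnth hch]] := S3 p' hp' hne' hn.
  split; first by exists psi'.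
  split; first by rewrite nth_cat size_cat ltnNge leq_addr /= addKn.
  by move=> j c hi1 hi2; rewrite -catA (star_nth hpw' hi (prefix_prefix _ _)) drop_size_cat // hch.
Qed.
Lemma star_empty (s : seq (addr * ptree)) d :
  (forall k, k < size s -> forall x, (nth0 s k).2 x = None) -> star s d = None.
Proof.
elim: s => [|[c h] s IH] H //; rewrite star_cons; case: ifP => _; first exact: (H 0 isT).
by apply: IH => k hk; exact: (H k.+1 hk).
Qed.

Lemma star_nonempty (s : seq (addr * ptree)) i : pw_incomp (unzip1 s) -> i < size s ->
  nonempty (nth0 s i).2 -> nonempty (star s).
Proof.
case/andP=> _ hpw hi [x hx]; exists ((nth0 s i).1 ++ x).
by rewrite (star_nth hpw hi (prefix_prefix _ _)) drop_size_cat.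
Qed.

Lemma unzip1_set (s : seq (addr * ptree)) i y : i < size s -> y.1 = (nth0 s i).1 ->
  unzip1 (set_nth ([::], pe) s i y) = unzip1 s.
Proof.
elim: s i => [|[c h] s IH] [|i] //= hi hy; first by rewrite hy.
by rewrite IH.
Qed.

Lemma star_set_other (s : seq (addr * ptree)) i y d : i < size s -> y.1 = (nth0 s i).1 ->
  ~~ prefix y.1 d -> star (set_nth ([::], pe) s i y) d = star s d.
Proof.
elim: s i y => [|[c h] s IH] [|i] [c' h'] //= hi hy hd.
  by subst c'; rewrite !star_cons (negbTE hd).
by rewrite !star_cons IH.
Qed.

Lemma remove_star (s : seq (addr * ptree)) i a : pw_incomp (unzip1 s) -> i < size s ->
  remove (star s) ((nth0 s i).1 ++ a) =
  star (set_nth ([::], pe) s i ((nth0 s i).1, remove (nth0 s i).2 a)).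
Proof.
move=> hps hi.
set s' := set_nth _ s i _.
have hu : unzip1 s' = unzip1 s by apply: unzip1_set.
have hps' : pw_incomp (unzip1 s') by rewrite hu.
have hpw : pairwise incomparable (unzip1 s) by case/andP: hps.
have hpw' : pairwise incomparable (unzip1 s') by case/andP: hps'.
have hi' : i < size s' by rewrite /s' size_set_nth; apply: leq_trans (leq_maxl _ _).
have hn' : nth0 s' i = ((nth0 s i).1, remove (nth0 s i).2 a) by rewrite /s' nth_set_nth /= eqxx.
apply: fext => d; rewrite /remove.
case hpd: (prefix (nth0 s i).1 d).
  rewrite prefix_drop // (star_nth hpw hi hpd).
  have hpd' : prefix (nth0 s' i).1 d by rewrite hn'.
  by rewrite (star_nth hpw' hi' hpd') hn'.
case: ifP => hd.
  have hd' : prefix d (nth0 s' i).1 by rewrite hn'; exact: (prefix_split hd (negbT hpd)).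
  by rewrite (star_above_none hps' hi' hd') // hn' hpd.
by rewrite /s' star_set_other //= hpd.
Qed.

Lemma equiv_nonempty t u : bequiv t u -> (nonempty t <-> nonempty u).
Proof.
elim => {t u}.
- by [].
- by move=> phi; split.
- by move=> phi t1 t2 u1 u2 *; split => _; exists [::].
- move=> s r hsz hps hpr _ _ _ [i [hi [hs hr]]]; split => _.
    by apply: (@star_nonempty r i hpr) => //; rewrite -hsz.
  exact: (@star_nonempty s i hps hi).
Qed.

Lemma equiv_bp t u : bequiv t u -> blueprint t /\ blueprint u.
Proof.
elim => {t u}.
- by split; exact: bp_pempty.
- by split; exact: bp_leaf.
- move=> phi t1 t2 u1 u2 n1 n2 n3 n4 _ [b1 b3] _ [b2 b4]; split; exact: bp_at2.
- move=> s r hsz hps hpr _ _ IH _; split; apply: bp_star => // i hi.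
    exact: (IH i hi).1.
  by rewrite -hsz in hi; exact: (IH i hi).2.
Qed.
Lemma remove_leaf psi : remove (leaf psi) [::] = pe.
Proof. by apply: fext => -[|x d]. Qed.

Lemma equiv_pe t : (forall d, t d = None) -> bequiv t pe -> True.
Proof. by []. Qed.

Lemma equiv_step t u : bequiv t u -> forall a phi, Step t a phi ->
  exists a', Step u a' phi /\ bequiv (remove t a) (remove u a').
Proof.
elim => {t u}.
- by move=> a phi [].
- move=> psi a phi hS; have [S1 _ _] := hS.
  case: a hS S1 => [|x a] hS // _; exists [::]; split => //.
  rewrite remove_leaf; exact: equiv_empty.
- move=> psi t1 t2 u1 u2 n1 n2 n3 n4 e1 IH1 e2 IH2 a phi hS.
  have [S1 _ S3] := hS.
  case: a hS S1 S3 => [|x a] hS S1 S3; first by discriminate S1.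
  have hn0 : at2 psi t1 t2 [::] <> None by [].
  have [_ [/= hx _]] := S3 [::] (prefix0s _) isT hn0; subst x.
  have hS2 : Step t2 a phi := Step_restr (b := [:: 2]) hS.
  have [a' [hS' he]] := IH2 a phi hS2.
  exists (2 :: a'); split; first exact: Step_at2.
  rewrite !remove_at2 /star0 /=; apply: equiv_star => //=.
  + by case.
  + by case=> [|[|i]].
  + by exists 0.
- move=> s r hsz hps hpr hnb hcomp IH hex a phi hS.
  have [S1 _ _] := hS.
  have [i [hi hpi]] : exists i, i < size s /\ prefix (nth0 s i).1 a by apply: star_some; rewrite S1.
  case/prefixP: hpi => a1 ha; subst a.
  have hpws : pairwise incomparable (unzip1 s) by case/andP: hps.
  have hSi : Step (nth0 s i).2 a1 phi.
    have := Step_restr hS.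
    have -> // : restr (star s) (nth0 s i).1 = (nth0 s i).2.
    by apply: fext => x; rewrite /restr (star_nth hpws hi (prefix_prefix _ _)) drop_size_cat.
  have [a2 [hS2 he]] := IH i hi a1 phi hSi.
  have hir : i < size r by rewrite -hsz.
  exists ((nth0 r i).1 ++ a2); split; first exact: Step_star.
  rewrite (remove_star _ hps hi) (remove_star _ hpr hir).
  set s' := set_nth _ s i _; set r' := set_nth _ r i _.
  have hsz' : size s' = size r' by rewrite !size_set_nth hsz.
  have hus : unzip1 s' = unzip1 s by apply: unzip1_set.
  have hur : unzip1 r' = unzip1 r by apply: unzip1_set.
  have hss : size s' = size s by rewrite size_set_nth; apply/maxn_idPr.
  have hcomp' : forall k, k < size s' -> bequiv (nth0 s' k).2 (nth0 r' k).2.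
    move=> k hk; rewrite /s' /r' !nth_set_nth /=; case: eqP => // _.
    by apply: hcomp; rewrite -hss.
  case: (classic (exists k, k < size s' /\ nonempty (nth0 s' k).2 /\ nonempty (nth0 r' k).2)) => [hex'|hnex].
    apply: equiv_star => //; by rewrite ?hus ?hur.
  have hemp : forall k, k < size s' -> (forall x, (nth0 s' k).2 x = None) /\ (forall x, (nth0 r' k).2 x = None).
    move=> k hk; have hiff := equiv_nonempty (hcomp' k hk).
    have hn : ~ nonempty (nth0 s' k).2 by move=> hn; apply: hnex; exists k; split => //; split => //; exact/hiff.
    split => x; apply: NNPP => hx.
      by apply: hn; exists x.
    by apply: hn; apply/hiff; exists x.
  have -> : star s' = pe by apply: fext => d; apply: star_empty => k hk; exact: (hemp k hk).1.
  have -> : star r' = pe.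
    by apply: fext => d; apply: star_empty => k hk; rewrite -hsz' in hk; exact: (hemp k hk).2.
  exact: equiv_empty.
Qed.
Definition shift (g : ptree) (a : addr) : ptree :=
  fun d => if prefix a d then g (drop (size a) d) else None.
Definition overlay (f g : ptree) : ptree :=
  fun d => if f d is Some v then Some v else g d.

Lemma shift_pre g a y : shift g a (a ++ y) = g y.
Proof. by rewrite /shift prefix_prefix drop_size_cat. Qed.

Lemma shift_npre g a d : ~~ prefix a d -> shift g a d = None.
Proof. by rewrite /shift => /negbTE ->. Qed.

Lemma shift_some g a d : shift g a d <> None -> exists2 y, d = a ++ y & g y <> None.
Proof.
rewrite /shift; case: ifP => // /prefixP [y ->]; rewrite drop_size_cat // => h.
by exists y.
Qed.

Lemma overlayE f g d : overlay f g d = if f d is Some v then Some v else g d.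
Proof. by []. Qed.

Lemma overlay_l f g d : f d <> None -> overlay f g d = f d.
Proof. by rewrite /overlay; case: (f d). Qed.

Lemma overlay_r f g d : f d = None -> overlay f g d = g d.
Proof. by rewrite /overlay => ->. Qed.

Lemma incomp_cat a b y : incomparable a b -> ~~ prefix a (b ++ y).
Proof. by move=> h; apply/negP => hp; apply: (incomp_pref h hp (prefix_prefix b y)). Qed.

Lemma prefix_cat_nth (p a : addr) : prefix p a -> p != a ->
  exists w, a = p ++ nth 0 a (size p) :: w.
Proof.
case/prefixP => -[|k w] ->; first by rewrite cats0 eqxx.
by move=> _; exists w; rewrite nth_cat ltnn subnn.
Qed.
Lemma shift_remove_in g a x d : prefix d (a ++ x) -> shift (remove g x) a d = None.
Proof.
rewrite /shift /remove; case: ifP => // /prefixP [q ->].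
by rewrite drop_size_cat // prefix_catr // eqxx /= => ->.
Qed.

Lemma shift_remove_out g a x d : ~~ prefix d (a ++ x) -> shift (remove g x) a d = shift g a d.
Proof.
rewrite /shift /remove; case: ifP => // /prefixP [q ->].
by rewrite drop_size_cat // prefix_catr // eqxx /= => /negbTE ->.
Qed.

Section RStep.
Variables (T g0 g1 : ptree) (a b : addr).
Hypothesis H0 : bequiv g0 g1.
Hypothesis Hab : incomparable a b.
Hypothesis H4 : forall y z, g0 y <> None -> T (a ++ y ++ z) = None.
Hypothesis H5 : forall y z, g1 y <> None -> T (b ++ y ++ z) = None.
Hypothesis H6 : forall p y, T p <> None -> g1 y <> None -> prefix p (b ++ y) ->
  [/\ prefix p a, p != a, prefix p b, p != b & nth 0 a (size p) = nth 0 b (size p)].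

Let t := overlay T (shift g0 a).
Let u := overlay t (shift g1 b).

Lemma L_tA y : g0 y <> None -> t (a ++ y) = g0 y.
Proof. by move=> hy; rewrite /t overlay_r ?shift_pre //; have := @H4 y [::] hy; rewrite cats0. Qed.

Lemma L_tB y z : g1 y <> None -> t (b ++ y ++ z) = None.
Proof.
move=> hy; rewrite /t overlay_r ?H5 //; apply: shift_npre; exact: incomp_cat.
Qed.

Lemma L_uB y : g1 y <> None -> u (b ++ y) = g1 y.
Proof. by move=> hy; rewrite /u overlay_r ?shift_pre //; have := @L_tB y [::] hy; rewrite cats0. Qed.

Lemma L_unb d : ~~ prefix b d -> u d = t d.
Proof. by move=> h; rewrite /u /overlay shift_npre //; case: (t d). Qed.

Lemma L_tT d : T d <> None -> t d = T d.
Proof. by move=> h; rewrite /t overlay_l. Qed.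

Lemma L_tnb d : prefix d b -> t d = T d.
Proof.
move=> hd; rewrite /t /overlay; case: (T d) => // ; apply: shift_npre; apply/negP => ha.
by apply: (incomp_pref Hab (prefix_trans ha hd) (prefix_refl b)).
Qed.

Lemma L_g0ne y : g1 y <> None -> exists y0, g0 y0 <> None.
Proof. by move=> hy; apply/(equiv_nonempty H0); exists y. Qed.

Lemma L_child x phi p i c : Step t x phi -> prefix p x -> p != x -> t p <> None ->
  i != 1 -> i != 2 -> shift g1 b (p ++ i :: c) = None.
Proof.
move=> [S1 S2 S3] hp hne hn hi1 hi2; case E: (shift g1 b (p ++ i :: c)) => [v|] //.
have [y ey hy] : exists2 y, p ++ i :: c = b ++ y & g1 y <> None by apply: shift_some; rewrite E.
have hpb : prefix p (b ++ y) by rewrite -ey prefix_prefix.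
have [_ [_ hch]] := S3 p hp hne hn.
case hT: (T p) => [w|].
  have hTn : T p <> None by rewrite hT.
  have [pa pna pb pnb hnth] := H6 hTn hy hpb.
  have [y0 hy0] := L_g0ne hy.
  have [w1 ea] := prefix_cat_nth pa pna.
  have [w2 eb] := prefix_cat_nth pb pnb.
  have hik : i = nth 0 a (size p).
    move: ey; rewrite {1}eb -catA => /(congr1 (drop (size p))); rewrite !drop_size_cat //.
    by case=> -> _; rewrite hnth.
  have := hch i (w1 ++ y0) hi1 hi2; rewrite hik -cat_cons catA -ea.
  by rewrite L_tA.
have [q eq hq] : exists2 q, p = a ++ q & g0 q <> None.
  by apply: shift_some; move: hn; rewrite /t overlay_r.
exfalso; apply: (negP (incomp_cat y Hab)); rewrite eq in hpb; exact: catl_prefix hpb.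
Qed.

Lemma L_Stepu x phi : Step t x phi ->
  (forall y, g1 y <> None -> ~~ prefix (b ++ y) x) ->
  (forall y, g1 y <> None -> ~~ prefix x (b ++ y)) -> Step u x phi.
Proof.
move=> hS h1 h2; have [S1 S2 S3] := hS; split.
- by rewrite /u overlay_l // S1.
- move=> z hz; rewrite /u overlay_r ?S2 //.
  case E: (shift g1 b (x ++ z)) => [v|] //.
  have [y ey hy] : exists2 y, x ++ z = b ++ y & g1 y <> None by apply: shift_some; rewrite E.
  by move: (h2 y hy); rewrite -ey prefix_prefix.
- move=> p hp hne hn; case ht: (t p) => [v|].
    have htn : t p <> None by rewrite ht.
    have [hA [hnth hch]] := S3 p hp hne htn.
    rewrite /u overlay_l //; split => //; split => // i c hi1 hi2.
    by rewrite overlay_r ?hch // (L_child c hS hp hne htn).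
  have [y ey hy] : exists2 y, p = b ++ y & g1 y <> None.
    by apply: shift_some; move: hn; rewrite /u overlay_r.
  by move: (h1 y hy); rewrite -ey hp.
Qed.

Lemma L_remu x : (forall y, g1 y <> None -> ~~ prefix (b ++ y) x) ->
  remove u x = overlay (remove t x) (shift g1 b).
Proof.
move=> h1; apply: fext => d; rewrite /remove /overlay; case hd: (prefix d x) => /=; last by [].
case E: (shift g1 b d) => [v|] //.
have [y ey hy] : exists2 y, d = b ++ y & g1 y <> None by apply: shift_some; rewrite E.
by move: (h1 y hy); rewrite -ey hd.
Qed.

Lemma stepT x phi : Step t x phi -> T x <> None ->
  [/\ Step u x phi, remove t x = overlay (remove T x) (shift g0 a)
    & remove u x = overlay (remove t x) (shift g1 b)].
Proof.
move=> hS hT; have [S1 S2 S3] := hS.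
have h1 : forall y, g1 y <> None -> ~~ prefix (b ++ y) x.
  by move=> y hy; apply/negP => /prefixP [z ez]; apply: hT; rewrite ez -catA H5.
have h2 : forall y, g1 y <> None -> ~~ prefix x (b ++ y).
  move=> y hy; apply/negP => hxb.
  have [pa pna _ _ _] := H6 hT hy hxb.
  have [y0 hy0] := L_g0ne hy.
  have [w ea] := prefix_cat_nth pa pna.
  have := S2 (nth 0 a (size x) :: w ++ y0) isT.
  by rewrite -cat_cons catA -ea L_tA.
split.
- exact: L_Stepu.
- apply: fext => d; rewrite /remove /overlay; case hd: (prefix d x) => /=; last by [].
  case E: (shift g0 a d) => [v|] //.
  have [y ey hy] : exists2 y, d = a ++ y & g0 y <> None by apply: shift_some; rewrite E.
  by case/prefixP: hd => z ez; exfalso; apply: hT; rewrite ez ey -catA H4.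
- exact: L_remu.
Qed.

Lemma stepG x phi : Step t x phi -> T x = None ->
  exists x' y', [/\ x = a ++ x', Step u x phi, Step (remove u x) (b ++ y') phi,
    bequiv (remove g0 x') (remove g1 y') &
    remove t x = overlay (remove T x) (shift (remove g0 x') a) /\
    remove (remove u x) (b ++ y') = overlay (remove t x) (shift (remove g1 y') b)].
Proof.
move=> hS hT; have [S1 S2 S3] := hS.
have [x' ex hx'] : exists2 x', x = a ++ x' & g0 x' <> None.
  by apply: shift_some; move: S1; rewrite /t overlay_r // => ->.
subst x.
have hg0 : g0 x' = Some (Form phi) by rewrite -L_tA.
have hSg0 : Step g0 x' phi.
  split => //.
  - move=> z hz; case E: (g0 (x' ++ z)) => [v|] //.
    have hE : g0 (x' ++ z) <> None by rewrite E.
    by move: (S2 z hz); rewrite -catA L_tA // E.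
  - move=> q hq hne hn.
    have hq' : prefix (a ++ q) (a ++ x') by rewrite prefix_catr // eqxx.
    have hne' : a ++ q != a ++ x'.
      by apply: contraNneq hne => /(congr1 (drop (size a))); rewrite !drop_size_cat // => ->.
    have hn' : t (a ++ q) <> None by rewrite L_tA.
    have [[psi hpsi] [hnth hch]] := S3 _ hq' hne' hn'.
    split; first by exists psi; rewrite -L_tA.
    split; first by move: hnth; rewrite nth_cat size_cat ltnNge leq_addr /= addKn.
    move=> i c hi1 hi2; case E: (g0 (q ++ i :: c)) => [v|] //.
    have hE : g0 (q ++ i :: c) <> None by rewrite E.
    by move: (hch i c hi1 hi2); rewrite -catA L_tA // E.
have [y' [hSg1 heq]] := equiv_step H0 hSg0.
have [G1 G2 G3] := hSg1.
have hy' : g1 y' <> None by rewrite G1.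
have h1 : forall y, g1 y <> None -> ~~ prefix (b ++ y) (a ++ x').
  move=> y _; apply/negP => /catl_prefix hb.
  exact: (incomp_pref Hab (prefix_prefix a x') hb).
have h2 : forall y, g1 y <> None -> ~~ prefix (a ++ x') (b ++ y).
  by move=> y _; apply/negP => /catl_prefix; apply/negP; apply: incomp_cat.
have hnbx : forall q, prefix (b ++ q) (a ++ x') = false.
  by move=> q; apply/negP => /catl_prefix hb; exact: (incomp_pref Hab (prefix_prefix a x') hb).
have hru : forall q, remove u (a ++ x') (b ++ q) = u (b ++ q) by move=> q; rewrite /remove hnbx.
have hTb : forall q, T (b ++ q) <> None -> prefix (b ++ q) (b ++ y') -> False.
  move=> q hq hp; have [_ _ hpb hne _] := H6 hq hy' hp.
  move: hne; have := size_prefix hpb; rewrite size_cat -{2}(addn0 (size b)) leq_add2l leqn0.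
  by rewrite size_eq0 => /eqP ->; rewrite cats0 eqxx.
exists x', y'; split => //.
- exact: L_Stepu.
- split.
  + by rewrite hru L_uB.
  + by move=> z hz; rewrite -catA hru /u overlay_r ?L_tB // shift_pre G2.
  + move=> p hp hne hn.
    case hbp: (prefix b p); last first.
      have hpb := prefix_split hp (negbT hbp).
      exfalso; apply: hn; rewrite /remove; case: ifP => // hpx.
      rewrite L_unb ?hbp // L_tnb //.
      case hTp: (T p) => [w|] //.
      have hTp' : T p <> None by rewrite hTp.
      have [pa _ _ _ _] := H6 hTp' hy' hp.
      by rewrite (prefix_trans pa (prefix_prefix a x')) in hpx.
    case/prefixP: hbp => q eq; subst p.
    have hq : prefix q y' by move: hp; rewrite prefix_catr // eqxx.
    have hqne : q != y' by apply: contraNneq hne => ->.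
    have htq : t (b ++ q) = None.
      rewrite /t /overlay; case hTq: (T (b ++ q)) => [w|].
        by exfalso; apply: (hTb q); rewrite ?hTq.
      by apply: shift_npre; apply: incomp_cat.
    have hu : remove u (a ++ x') (b ++ q) = g1 q by rewrite hru /u overlay_r // shift_pre.
    rewrite hu in hn.
    have [[psi hpsi] [hnth hch]] := G3 q hq hqne hn.
    split; first by exists psi; rewrite hu.
    split; first by rewrite nth_cat size_cat ltnNge leq_addr /= addKn.
    move=> i c hi1 hi2; rewrite -catA hru /u overlay_r ?shift_pre ?hch //.
    by apply: L_tB; rewrite hpsi.
- split.
  + apply: fext => d; rewrite /remove /overlay; case hd: (prefix d (a ++ x')) => /=.
      by rewrite shift_remove_in.
    by rewrite /t /overlay shift_remove_out ?hd.
  + apply: fext => d; rewrite {1}/remove.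
    case hd: (prefix d (b ++ y')).
      rewrite /overlay shift_remove_in // /remove; case: ifP => // hdx.
      case hbd: (prefix b d).
        case/prefixP: hbd => q eq; subst d.
        rewrite /t /overlay; case hTq: (T (b ++ q)) => [w|].
          by exfalso; apply: (hTb q); rewrite ?hTq.
        by rewrite shift_npre // incomp_cat.
      have hdb := prefix_split hd (negbT hbd).
      rewrite L_tnb //; case hTd: (T d) => [w|] //.
      have hTd' : T d <> None by rewrite hTd.
      have [pa _ _ _ _] := H6 hTd' hy' hd.
      by rewrite (prefix_trans pa (prefix_prefix a x')) in hdx.
    rewrite /remove /overlay; case hdx: (prefix d (a ++ x')) => /=.
      rewrite shift_npre //; apply/negP => hbd.
      by have := hnbx [::]; rewrite cats0 (prefix_trans hbd hdx).
    by rewrite /u /overlay shift_remove_out ?hd.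
Qed.

End RStep.
Lemma sim_plus (Q : ptree -> ptree -> Prop) :
  (forall t u a phi t', Q t u -> ext a phi t t' -> exists u', ext_plus phi u u' /\ Q t' u') ->
  forall phi t t', ext_plus phi t t' -> forall u, Q t u -> exists u', ext_plus phi u u' /\ Q t' u'.
Proof.
move=> H phi t t'; elim => {t t'}.
- by move=> t t' [a ha] u hq; exact: H hq ha.
- move=> x y z _ IH1 _ IH2 u hq.
  have [u1 [h1 q1]] := IH1 u hq.
  have [u2 [h2 q2]] := IH2 u1 q1.
  by exists u2; split => //; exact: t_trans h1 h2.
Qed.

Lemma sim_inF (Q : ptree -> ptree -> Prop) :
  (forall t u, Q t u -> (forall d, t d = None) -> forall d, u d = None) ->
  (forall t u a phi t', Q t u -> ext a phi t t' -> exists u', ext_plus phi u u' /\ Q t' u') ->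
  forall t l, inF t l -> forall u, Q t u -> inF u l.
Proof.
move=> He Hs t l; elim => {t l}.
- move=> u hq; have -> : u = pe by apply: fext => d; exact: (He _ _ hq (fun _ => erefl) d).
  exact: inF_nil.
- move=> t t' phi l hp _ IH u hq.
  have [u' [h1 q1]] := sim_plus Hs hp hq.
  exact: inF_rcons h1 (IH _ q1).
Qed.

Lemma equiv_inF t u l : bequiv t u -> inF t l -> inF u l.
Proof.
move=> he hi; apply: (sim_inF (Q := bequiv) _ _ hi he).
- move=> t1 u1 h e d; apply: NNPP => hd.
  have [x hx] : nonempty t1 by apply/(equiv_nonempty h); exists d.
  by apply: hx; exact: e.
- move=> t1 u1 a phi t' h hx.
  have [hS ->] := ext_sound hx.
  have [a' [hS' he']] := equiv_step h hS.
  exists (remove u1 a'); split => //.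
  apply: t_step; exists a'; apply: ext_complete => //.
  exact: (equiv_bp h).2.
Qed.

Definition Rb T g0 g1 a b t u : Prop :=
  [/\ bequiv g0 g1, incomparable a b, t = overlay T (shift g0 a), u = overlay t (shift g1 b) &
   [/\ (forall y z, g0 y <> None -> T (a ++ y ++ z) = None),
       (forall y z, g1 y <> None -> T (b ++ y ++ z) = None) &
       (forall p y, T p <> None -> g1 y <> None -> prefix p (b ++ y) ->
         [/\ prefix p a, p != a, prefix p b, p != b & nth 0 a (size p) = nth 0 b (size p)])]].

Definition Rq t u := (exists T g0 g1 a b, Rb T g0 g1 a b t u) /\ blueprint u.

Lemma Rb_mono T g0 g1 a b t u T' g0' g1' :
  Rb T g0 g1 a b t u -> bequiv g0' g1' ->
  (forall d, T' d <> None -> T d <> None) ->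
  (forall d, g0' d <> None -> g0 d <> None) ->
  (forall d, g1' d <> None -> g1 d <> None) ->
  Rb T' g0' g1' a b (overlay T' (shift g0' a)) (overlay (overlay T' (shift g0' a)) (shift g1' b)).
Proof.
move=> [_ hab _ _ [h4 h5 h6]] he hT h0 h1; split => //; split.
- move=> y z hy; case E: (T' _) => [v|] //; exfalso; apply: (hT (a ++ y ++ z)).
    by rewrite E.
  exact: h4 (h0 _ hy).
- move=> y z hy; case E: (T' _) => [v|] //; exfalso; apply: (hT (b ++ y ++ z)).
    by rewrite E.
  exact: h5 (h1 _ hy).
- move=> p y hp hy hpy; exact: h6 (hT _ hp) (h1 _ hy) hpy.
Qed.
Lemma remove_sub t x d : remove t x d <> None -> t d <> None.
Proof. by rewrite /remove; case: ifP. Qed.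

Lemma Rq_empty t u : Rq t u -> (forall d, t d = None) -> forall d, u d = None.
Proof.
move=> [[T [g0 [g1 [a [b [he hab et eu _]]]]]] _] ht d; subst u t.
rewrite overlay_r ?ht //; case E: (shift g1 b d) => [v|] //; exfalso.
have [y _ hy] : exists2 y, d = b ++ y & g1 y <> None by apply: shift_some; rewrite E.
have [y0 hy0] : nonempty g0 by apply/(equiv_nonempty he); exists y.
by apply: hy0; have := ht (a ++ y0); rewrite /overlay shift_pre; case: (T _).
Qed.

Lemma Rq_step t u x phi t' : Rq t u -> ext x phi t t' -> exists u', ext_plus phi u u' /\ Rq t' u'.
Proof.
move=> [[T [g0 [g1 [a [b hR]]]]] hbu] hx; have [he hab et eu [h4 h5 h6]] := hR.
have [hS ->] := ext_sound hx.
subst u t.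
case hT: (T x) => [v|].
- have hTn : T x <> None by rewrite hT.
  have [hSu e1 e2] := stepT he hab h4 h5 h6 hS hTn.
  eexists; split.
    apply: t_step; exists x; exact: ext_complete hbu hSu.
  split; last exact: bp_remove.
  exists (remove T x), g0, g1, a, b; rewrite e2 e1.
  by apply: (Rb_mono hR) => // d; apply: remove_sub.
- have [x' [y' [ex hSu hSu1 heq [e1 e2]]]] := stepG he hab h4 h5 h6 hS hT.
  eexists; split.
    apply: t_trans; apply: t_step.
      by exists x; exact: ext_complete hbu hSu.
    by exists (b ++ y'); apply: ext_complete hSu1; exact: bp_remove.
  split; last by do 2 apply: bp_remove.
  exists (remove T x), (remove g0 x'), (remove g1 y'), a, b; rewrite e2 e1.
  by apply: (Rb_mono hR) => // d; apply: remove_sub.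
Qed.

Lemma Rq_inF t u l : Rq t u -> inF t l -> inF u l.
Proof.
move=> hq hi; apply: (sim_inF (Q := Rq) _ _ hi hq).
- exact: Rq_empty.
- move=> t1 u1 a phi t2 hq1 hx; exact: Rq_step hq1 hx.
Qed.
Lemma incomp_cons k a b : incomparable (k :: a) (k :: b) = incomparable a b.
Proof. by rewrite /incomparable /= eqxx. Qed.

Lemma Rb_atl phi g T g0 g1 a b t u : Rb T g0 g1 a b t u ->
  Rb (at2 phi T g) g0 g1 (1 :: a) (1 :: b) (at2 phi t g) (at2 phi u g).
Proof.
move=> [he hab et eu [h4 h5 h6]]; subst u t; split => //.
- apply: fext => -[|k c] //; case: k => [|[|[|k]]] //=; rewrite /overlay /shift //=.
  by case: (g c).
- apply: fext => -[|k c] //; case: k => [|[|[|k]]] //=; rewrite /overlay /shift //=.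
  by case: (g c).
- split.
  + by move=> y z hy; exact: h4.
  + by move=> y z hy; exact: h5.
  + move=> [|k p] y hp hy hpy; first by split => //; rewrite prefix0s.
    move: hpy; rewrite /= => /andP[/eqP ek hpy]; subst k.
    have [pa pna pb pnb hnth] := h6 _ _ hp hy hpy.
    by split => //=; rewrite ?eqxx ?pa ?pb // eqseq_cons negb_and pna orbT.
Qed.

Lemma Rb_atr phi g T g0 g1 a b t u : Rb T g0 g1 a b t u ->
  Rb (at2 phi g T) g0 g1 (2 :: a) (2 :: b) (at2 phi g t) (at2 phi g u).
Proof.
move=> [he hab et eu [h4 h5 h6]]; subst u t; split => //.
- apply: fext => -[|k c] //; case: k => [|[|[|k]]] //=; rewrite /overlay /shift //=.
  by case: (g c).
- apply: fext => -[|k c] //; case: k => [|[|[|k]]] //=; rewrite /overlay /shift //=.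
  by case: (g c).
- split.
  + by move=> y z hy; exact: h4.
  + by move=> y z hy; exact: h5.
  + move=> [|k p] y hp hy hpy; first by split => //; rewrite prefix0s.
    move: hpy; rewrite /= => /andP[/eqP ek hpy]; subst k.
    have [pa pna pb pnb hnth] := h6 _ _ hp hy hpy.
    by split => //=; rewrite ?eqxx ?pa ?pb // eqseq_cons negb_and pna orbT.
Qed.
Lemma star_rcons (s : seq (addr * ptree)) c g :
  all (fun x => incomparable x c) (unzip1 s) ->
  star (rcons s (c, g)) = overlay (star s) (shift g c).
Proof.
move=> H; apply: fext => d; elim: s H => [|[c0 h] s IH] /= H.
  by rewrite star_cons /overlay /shift /=; case: ifP.
case/andP: H => h0 H; rewrite !star_cons; case: ifP => hc0; first last.
  by rewrite IH // /overlay star_cons hc0.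
rewrite /overlay star_cons hc0 shift_npre; first by case: (h _).
by apply/negP => hc; exact: (incomp_pref h0 hc0 hc).
Qed.

Lemma node_cone (s : seq (addr * ptree)) c e z :
  all (fun x => incomparable x c) (unzip1 s) -> star s e <> None -> ~~ prefix c (e ++ z).
Proof.
move=> H he; have [k [hk hpk]] := star_some he.
apply/negP => hc.
have hx : (nth0 s k).1 \in unzip1 s by rewrite -(nth_map _ [::]) // mem_nth // size_map.
exact: (incomp_pref (allP H _ hx) (prefix_catl _ hpk) hc).
Qed.

Lemma overlay_swap A B C : (forall d, B d <> None -> C d = None) ->
  overlay (overlay A B) C = overlay (overlay A C) B.
Proof.
move=> H; apply: fext => d; rewrite /overlay.
case: (A d) => // ; case E: (B d) => [v|]; last by case: (C d).
by rewrite H // E.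
Qed.

Lemma Rb_star (s r : seq (addr * ptree)) c g T g0 g1 a b :
  all (fun x => incomparable x c) (unzip1 s) -> all (fun x => incomparable x c) (unzip1 r) ->
  Rb T g0 g1 a b (star s) (star r) ->
  Rb (overlay T (shift g c)) g0 g1 a b (star (rcons s (c, g))) (star (rcons r (c, g))).
Proof.
move=> hs hr [he hab et eu [h4 h5 h6]].
have ns : forall y, g0 y <> None -> star s (a ++ y) <> None.
  by move=> y hy; rewrite et /overlay shift_pre; case: (T _).
have nr : forall y, g1 y <> None -> star r (b ++ y) <> None.
  by move=> y hy; rewrite eu /overlay shift_pre; case: (star s _).
have d0 : forall d, shift g0 a d <> None -> shift g c d = None.
  move=> d hd; have [y -> hy] := shift_some hd; apply: shift_npre.
  by have := node_cone [::] hs (ns y hy); rewrite cats0.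
have d1 : forall d, shift g1 b d <> None -> shift g c d = None.
  move=> d hd; have [y -> hy] := shift_some hd; apply: shift_npre.
  by have := node_cone [::] hr (nr y hy); rewrite cats0.
rewrite (star_rcons _ hs) (star_rcons _ hr); split => //.
- by rewrite et overlay_swap.
- by rewrite eu et (overlay_swap _ d1) (overlay_swap _ d0).
- split.
  + move=> y z hy; rewrite /overlay h4 // shift_npre //.
    by rewrite catA; exact: node_cone (ns y hy).
  + move=> y z hy; rewrite /overlay h5 // shift_npre //.
    by rewrite catA; exact: node_cone (nr y hy).
  + move=> p y hp hy hpy; case hT: (T p) => [w|].
      have hTp : T p <> None by rewrite hT.
      exact: h6 hTp hy hpy.
    exfalso; move: hp; rewrite /overlay hT => hp.
    have [q eq _] := shift_some hp; subst p.
    have := node_cone [::] hr (nr y hy); rewrite cats0.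
    by rewrite (prefix_trans (prefix_prefix c q) hpy).
Qed.

Lemma arr_R t u : arr 1 t u ->
  (exists T g0 g1 a b, Rb T g0 g1 a b t u /\ nonempty g1) /\ blueprint u.
Proof.
elim => {t u}.
- move=> as_ b gs hsa hsg hpw hcomp hne.
  case: as_ hsa hpw => [|a [|? ?]] // _ hpw.
  case: gs hsg hcomp hne => [|g0 [|g1 [|? ?]]] // _ hcomp hne.
  have e01 : bequiv g0 g1 := hcomp 0 isT.
  have hab : incomparable a b by move: hpw; rewrite /pw_incomp /= => /andP[_ /andP[/andP[]]].
  have hng1 : nonempty g1.
    apply: NNPP => h; apply: hne; rewrite /=.
    have -> : g1 = pe by apply: fext => d; apply: NNPP => hd; apply: h; exists d.
    exact: equiv_empty.
  split.
    exists pe, g0, g1, a, b; split => //; split => //=.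
    + apply: fext => d; rewrite star_cons /overlay /shift; by case: ifP.
    + apply: fext => d; rewrite /overlay !star_cons /shift.
      case ha: (prefix a d); case hb: (prefix b d) => //=; try by case: (g0 _).
      by exfalso; apply: (incomp_pref hab ha hb).
  apply: bp_star => //; case=> [|[|i]] //= _; first exact: (equiv_bp e01).1.
  exact: (equiv_bp e01).2.
- move=> phi t u g _ [[T [g0 [g1 [a [b [hR hn]]]]]] hbu] hnt hnu hbg hng.
  split; last exact: bp_at2.
  by exists (at2 phi T g), g0, g1, (1 :: a), (1 :: b); split => //; exact: Rb_atl.
- move=> phi t u g _ [[T [g0 [g1 [a [b [hR hn]]]]]] hbu] hnt hnu hbg hng.
  split; last exact: bp_at2.
  by exists (at2 phi g T), g0, g1, (2 :: a), (2 :: b); split => //; exact: Rb_atr.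
- move=> s r c g hps hpr hbs hbr hpsc hprc _ [[T [g0 [g1 [a [b [hR hn]]]]]] hbu] hbg hng.
  have hs : all (fun x => incomparable x c) (unzip1 s).
    by move: hpsc; rewrite /pw_incomp pairwise_rcons => /andP[_ /andP[]].
  have hr : all (fun x => incomparable x c) (unzip1 r).
    by move: hprc; rewrite /pw_incomp pairwise_rcons => /andP[_ /andP[]].
  split.
    by exists (overlay T (shift g c)), g0, g1, a, b; split => //; exact: Rb_star.
  apply: bp_star; first by rewrite /unzip1 map_rcons.
  move=> i; rewrite size_rcons ltnS => hi; rewrite nth_rcons.
  case: ltnP => hi'; first exact: hbr.
  have ei : i = size r by apply/eqP; rewrite eqn_leq hi hi'.
  by rewrite ei eqxx.
Qed.

Lemma sqsub_inF t u : sqsub 1 t u -> forall l, inF t l -> inF u l.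
Proof.
elim => {t u}.
- move=> t u [he|ha] l hi; first exact: equiv_inF he hi.
  have [[T [g0 [g1 [a [b [hR _]]]]]] hbu] := arr_R ha.
  by apply: (Rq_inF _ hi); split => //; exists T, g0, g1, a, b.
- by [].
- by move=> x y z _ IH1 _ IH2 l hi; apply: IH2; apply: IH1.
Qed.
End Proofs.

Theorem lemma4p11 (F : Type) (alpha beta : ptree F) :
  blueprint alpha -> blueprint beta ->
  sqsub 1 alpha beta ->
  forall l : seq F, inF alpha l -> inF beta l.
Proof. by move=> _ _ h l; exact: sqsub_inF h l. Qed.
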